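(* Let $m>1$ and let $T$ be a regular tournament matrix of order $m$. Put $N=T\otimes J_2+I_{2m}$. Let $H$ be a regular graph of order $2m$ with vertex set $X$, having an automorphism $\rho$ that is a fixed-point-free involution, such that the orbits of the full automorphism group of $H$ on $X$ are exactly the orbits of $\rho$. Let $B$ be the adjacency matrix of $H$, with vertices indexed so that $\rho$ is represented by the permutation matrix $R=I_m\otimes(J_2-I_2)$. Let $G$ be the graph on the disjoint union of two copies $X_1,X_2$ of $X$ with adjacency matrix \[ A=\begin{bmatrix} B & N\\ N^{\top} & B\end{bmatrix} \] (the first block row/column indexed by $X_1$, the second by $X_2$). Then $X_1$ is a Godsil-McKay switching set of $G$, the graph $G'$ obtained by Godsil-McKay switching with respect to $X_1$ is isomorphic to $G$, and there is no isomorphism from $G$ to $G'$ that maps $X_1$ onto itself.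
   Context: A $(0,1)$-matrix $T$ of order $m$ is a tournament matrix if $T+T^{\top}=J-I$; it is regular if all its row sums are equal. $J_2$ is the $2\times 2$ all-ones matrix, $I_k$ the $k\times k$ identity, and $\otimes$ the Kronecker product. A subset $X$ of the vertex set of a graph $G$ is a (Godsil-McKay) switching set if $X$ induces a regular subgraph of $G$ and every vertex outside $X$ has either $0$, $\tfrac12|X|$ or $|X|$ neighbours in $X$. Godsil-McKay switching with respect to $X$ produces the graph $G'$ on the same vertex set obtained as follows: for each vertex $x\notin X$ having exactly $\tfrac12|X|$ neighbours in $X$, delete the edges from $x$ to these neighbours and join $x$ instead to the other $\tfrac12|X|$ vertices of $X$; all other adjacencies are unchanged. *)

(* Defs.v *)
From mathcomp Require Import all_boot all_order all_algebra all_fingroup.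
From mathcomp Require Import mxtens.
Set Implicit Arguments. Unset Strict Implicit. Unset Printing Implicit Defensive.
Import GRing.Theory Num.Theory.
Local Open Scope ring_scope.

(* Integer matrices are used for (0,1)-matrices. Kronecker product: tensmx
   (notation A *t B) from mathcomp-real-closed's mxtens, with the standard
   index (i,j) |-> i*p + j. *)

Definition zero_one_mx {m n} (A : 'M[int]_(m, n)) : Prop :=
  forall i j, A i j = 0 \/ A i j = 1.

Definition tournament_mx {m} (T : 'M[int]_m) : Prop :=
  zero_one_mx T /\ T + T^T = const_mx 1 - 1%:M.

Definition regular_mx {m} (T : 'M[int]_m) : Prop :=
  exists k : int, forall i, \sum_j T i j = k.

Definition adjacency_mx {n} (A : 'M[int]_n) : Prop :=
  zero_one_mx A /\ A^T = A /\ forall i, A i i = 0.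

Definition adj {n} (A : 'M[int]_n) : rel 'I_n := fun x y => A x y == 1.

Definition nbrs_in {V : finType} (e : rel V) (X : {set V}) (x : V) : nat :=
  #|[set y in X | e x y]|.

Definition regular_graph {V : finType} (e : rel V) : Prop :=
  exists k, forall x : V, #|[set y | e x y]| = k.

Definition graph_aut {V : finType} (e : rel V) (s : {perm V}) : Prop :=
  forall x y, e (s x) (s y) = e x y.

Definition graph_iso {V : finType} (e1 e2 : rel V) (s : {perm V}) : Prop :=
  forall x y, e2 (s x) (s y) = e1 x y.

Definition GM_switching_set {V : finType} (e : rel V) (X : {set V}) : Prop :=
  (exists k, forall x, x \in X -> nbrs_in e X x = k) /\
  (forall x, x \notin X ->
     [\/ nbrs_in e X x = 0%N, (nbrs_in e X x).*2 = #|X| | nbrs_in e X x = #|X|]).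

Definition half_outside {V : finType} (e : rel V) (X : {set V}) (x : V) : bool :=
  (x \notin X) && ((nbrs_in e X x).*2 == #|X|).

Definition GM_switch {V : finType} (e : rel V) (X : {set V}) : rel V :=
  fun x y =>
    if ((x \in X) && half_outside e X y) || ((y \in X) && half_outside e X x)
    then ~~ e x y else e x y.

(* Main.v *)
Require Import Defs.
From mathcomp Require Import all_boot all_order all_algebra all_fingroup.
From mathcomp Require Import mxtens zify.
Import GRing.Theory Num.Theory.
Set Implicit Arguments. Unset Strict Implicit.
Local Open Scope ring_scope.

Notation pr x := (mxtens_unindex x).1.
Notation qr x := (mxtens_unindex x).2.

Lemma pq_eq m (x y : 'I_(m * 2)) : (x == y) = (pr x == pr y) && (qr x == qr y).
Proof.
apply/eqP/andP => [->|[/eqP h1 /eqP h2]]; first by rewrite !eqxx.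
rewrite -(mxtens_unindexK x) -(mxtens_unindexK y).
by congr mxtens_index; case: (mxtens_unindex x) h1 h2 => ? ?; case: (mxtens_unindex y) => ? ? /= -> ->.
Qed.

Lemma tour_e m (T : 'M[int]_m) : tournament_mx T ->
  forall i j, T i j + T j i = 1 - (i == j)%:R.
Proof. by move=> [_ /matrixP H] i j; move: (H i j); rewrite !mxE. Qed.

Lemma tour_diag m (T : 'M[int]_m) : tournament_mx T -> forall i, T i i = 0.
Proof. move=> HT i; have := tour_e HT i i; rewrite eqxx /=; lia. Qed.

Lemma tour01 m (T : 'M[int]_m) : tournament_mx T -> forall i j, T i j = 0 \/ T i j = 1.
Proof. by case. Qed.

Lemma Nentry m (T : 'M[int]_m) (x y : 'I_(m * 2)) :
  (T *t (const_mx 1 : 'M[int]_2) + 1%:M) x y = T (pr x) (pr y) + (x == y)%:R.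
Proof. by rewrite !mxE mulr1. Qed.

Lemma rho_pq m (rho : {perm 'I_(m * 2)})
  (Hrho_mx : perm_mx rho = (1%:M : 'M[int]_m) *t (const_mx 1 - 1%:M : 'M[int]_2)) x :
  pr (rho x) = pr x /\ qr (rho x) != qr x.
Proof.
have := congr1 (fun M : 'M[int]_(m*2) => M x (rho x)) Hrho_mx.
rewrite /= /perm_mx !mxE eqxx /=.
case: eqP => [->|]; case: eqP => //=.
by move=> h _; split => //; apply/eqP => e; exact: h (esym e).
Qed.

Lemma ord2_one (i j k : 'I_2) : j != k -> ((i == j)%:R + (i == k)%:R : int) = 1.
Proof.
case: i j k => [[|[|//]] ?] [[|[|//]] ?] [[|[|//]] ?] //=.
Qed.
Lemma keyN m (T : 'M[int]_m) (HT : tournament_mx T) (rho : {perm 'I_(m * 2)})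
  (Hrho_mx : perm_mx rho = (1%:M : 'M[int]_m) *t (const_mx 1 - 1%:M : 'M[int]_2)) a b :
  let N : 'M[int]_(m * 2) := T *t (const_mx 1 : 'M[int]_2) + 1%:M in
  N (rho b) a + N a b = 1.
Proof.
rewrite /= !Nentry; have [e1 e2] := rho_pq Hrho_mx b; rewrite !pq_eq e1.
case: (eqVneq (pr a) (pr b)) => [e|ne].
  rewrite e !tour_diag // /= !add0r [qr (rho b) == _]eq_sym; exact: ord2_one.
have := tour_e HT (pr b) (pr a); rewrite eq_sym (negbTE ne) /= => h.
rewrite addr0 addr0 h; lia.
Qed.

Lemma N01 m (T : 'M[int]_m) (HT : tournament_mx T) (a b : 'I_(m * 2)) :
  let N : 'M[int]_(m * 2) := T *t (const_mx 1 : 'M[int]_2) + 1%:M in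
  N a b = 0 \/ N a b = 1.
Proof.
rewrite /= Nentry; case: (eqVneq a b) => [->|ne]; first by rewrite tour_diag //; right.
rewrite addr0; case: HT => H _.
move: (H (pr a) (pr b)) => h. exact h.
Qed.

Lemma colsum m (T : 'M[int]_m) (HT : tournament_mx T) (k : int)
  (Hk : forall i, \sum_j T i j = k) (Hm : (0 < m)%N) c : \sum_i T i c = k /\ k *+ 2 + 1 = m%:R.
Proof.
have Hc c' : \sum_i T i c' = (m%:R - 1) - k.
  transitivity (\sum_i ((1 - (i == c')%:R) - T c' i)).
    by apply: eq_bigr => i _; rewrite -(tour_e HT i c'); lia.
  rewrite sumrB Hk sumrB sumr_const card_ord (bigD1 c') //= eqxx big1 => [|i /negbTE -> //].
  by rewrite addr0.
have tot : (m%:R * k : int) = m%:R * ((m%:R - 1) - k).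
  transitivity (\sum_(i < m) \sum_(j < m) T i j).
    by rewrite (eq_bigr _ (fun i _ => Hk i)) sumr_const card_ord mulr_natl.
  by rewrite exchange_big (eq_bigr _ (fun j _ => Hc j)) sumr_const card_ord mulr_natl.
have hk : k = (m%:R - 1) - k.
  by apply: (mulfI _ tot); rewrite pnatr_eq0 -lt0n.
rewrite Hc -hk; split => //; lia.
Qed.
Lemma Ncol m (T : 'M[int]_m) (HT : tournament_mx T) (HTreg : regular_mx T) (Hm : (0 < m)%N)
  (b : 'I_(m * 2)) :
  let N : 'M[int]_(m * 2) := T *t (const_mx 1 : 'M[int]_2) + 1%:M in
  #|[set a | N a b == 1]| = m.
Proof.
move=> N.
have e1 : (#|[set a | N a b == 1]|%:R : int) = \sum_a N a b.
  rewrite -sum1_card natr_sum big_mkcond /=; apply: eq_bigr => a _; rewrite inE.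
  by case: (N01 HT a b) => /= ->.
have e2 : \sum_a N a b = m%:R.
  case: HTreg => k Hk; have [Hc Hk2] := colsum HT Hk Hm (pr b).
  rewrite /N (eq_bigr _ (fun a _ => Nentry T a b)) big_split /=.
  have -> : \sum_(a < m * 2) ((a == b)%:R : int) = 1.
    by rewrite (bigD1 b) //= eqxx big1 ?addr0 // => a /negbTE ->.
  rewrite (reindex (@mxtens_index m 2)); last first.
    exact: onW_bij (Bijective (@mxtens_indexK m 2) (@mxtens_unindexK m 2)).
  rewrite (eq_bigr (fun p => T p.1 (pr b))) => [|p _]; last by change (T (pr (mxtens_index p)) (pr b) = T p.1 (pr b)); rewrite mxtens_indexK.
  rewrite -(pair_bigA _ (fun i (j : 'I_2) => T i (pr b))) /=.
  rewrite (eq_bigr (fun i => T i (pr b) *+ 2)) => [|i _]; last by rewrite sumr_const card_ord.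
  by rewrite sumrMnl Hc -Hk2.
by apply/eqP; rewrite -(eqr_nat int) e1 e2.
Qed.
Lemma ex_restr (V W : finType) (g : V -> W) (s : {perm W}) :
  injective g -> (forall v, exists v', s (g v) = g v') ->
  exists sig : {perm V}, forall v, s (g v) = g (sig v).
Proof.
move=> ginj H.
pose f v := odflt v [pick v' | s (g v) == g v'].
have Hf v : s (g v) = g (f v).
  rewrite /f; case: pickP => [v' /eqP //|/= h].
  by have [v' e] := H v; move: (h v'); rewrite e eqxx.
have finj : injective f.
  by move=> x y e; apply: ginj; apply: (@perm_inj _ s); rewrite !Hf e.
by exists (perm finj) => v; rewrite permE.
Qed.
Lemma bool_aux (t u : int) : t + u = 1 -> (u = 0 \/ u = 1) -> ~~ (t == 1) = (u == 1).
Proof.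
by move=> h [] e; rewrite e in h *; [have -> : t = 1 by lia | have -> : t = 0 by lia].
Qed.

Unset Implicit Arguments. Set Strict Implicit.

Theorem proposition3p1 (m : nat) (Hm : (1 < m)%N)
  (T : 'M[int]_m) (HT : tournament_mx T) (HTreg : regular_mx T)
  (B : 'M[int]_(m * 2)) (HB : adjacency_mx B) (HHreg : regular_graph (adj B))
  (rho : {perm 'I_(m * 2)})
  (Hrho_mx : perm_mx rho = (1%:M : 'M[int]_m) *t (const_mx 1 - 1%:M : 'M[int]_2))
  (Hrho_aut : graph_aut (adj B) rho)
  (Hrho_inv : forall x, rho (rho x) = x)
  (Hrho_ffp : forall x, rho x != x)
  (Horbits : forall x y : 'I_(m * 2),
      (exists s : {perm 'I_(m * 2)}, graph_aut (adj B) s /\ s x = y) <->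
      (y = x \/ y = rho x)) :
  let N : 'M[int]_(m * 2) := T *t (const_mx 1 : 'M[int]_2) + 1%:M in
  let A : 'M[int]_(m * 2 + m * 2) := block_mx B N N^T B in
  let X1 : {set 'I_(m * 2 + m * 2)} := [set lshift (m * 2) i | i : 'I_(m * 2)] in
  GM_switching_set (adj A) X1 /\
  (exists s : {perm 'I_(m * 2 + m * 2)}, graph_iso (adj A) (GM_switch (adj A) X1) s) /\
  ~ (exists s : {perm 'I_(m * 2 + m * 2)},
        graph_iso (adj A) (GM_switch (adj A) X1) s /\ s @: X1 = X1).
Proof.
move=> N A X1.
have Hm0 : (0 < m)%N by apply: ltn_trans Hm.
have inl1 a : lshift (m * 2) a \in X1 by apply/imsetP; exists a.
have inr1 b : rshift (m * 2) b \notin X1.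
  by apply/imsetP => -[a _ /eqP]; rewrite eq_rlshift.
have AE1 a b : adj A (lshift _ a) (lshift _ b) = adj B a b by rewrite /adj /A block_mxEul.
have AE2 a b : adj A (lshift _ a) (rshift _ b) = (N a b == 1) by rewrite /adj /A block_mxEur.
have AE3 a b : adj A (rshift _ a) (lshift _ b) = (N b a == 1) by rewrite /adj /A block_mxEdl mxE.
have AE4 a b : adj A (rshift _ a) (rshift _ b) = adj B a b by rewrite /adj /A block_mxEdr.
have cX1 : #|X1| = (m * 2)%N by rewrite card_imset ?card_ord //; exact: lshift_inj.
have nbR b : nbrs_in (adj A) X1 (rshift _ b) = m.
  rewrite /nbrs_in; transitivity #|[set a | N a b == 1]|; last exact: (Ncol HT HTreg Hm0 b).
  have -> : [set y in X1 | adj A (rshift _ b) y] = lshift _ @: [set a | N a b == 1].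
    apply/setP => y; rewrite inE -(splitK y); case: (split y) => a /=.
      by rewrite inl1 AE3 (mem_imset _ _ (@lshift_inj _ _)) inE.
    rewrite (negbTE (inr1 a)) /=; apply/esym/imsetP => -[c _ /eqP]; by rewrite eq_rlshift.
  by rewrite card_imset //; exact: lshift_inj.
have [k0 Hk0] := HHreg.
have nbL a : nbrs_in (adj A) X1 (lshift _ a) = k0.
  rewrite /nbrs_in; transitivity #|[set b | adj B a b]|; last exact: (Hk0 a).
  have -> : [set y in X1 | adj A (lshift _ a) y] = lshift _ @: [set b | adj B a b].
    apply/setP => y; rewrite inE -(splitK y); case: (split y) => c /=.
      by rewrite inl1 AE1 (mem_imset _ _ (@lshift_inj _ _)) inE.
    rewrite (negbTE (inr1 c)) /=; apply/esym/imsetP => -[d _ /eqP]; by rewrite eq_rlshift.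
  by rewrite card_imset //; exact: lshift_inj.
have hR b : half_outside (adj A) X1 (rshift _ b) by rewrite /half_outside inr1 nbR cX1 muln2 eqxx.
have hL a : half_outside (adj A) X1 (lshift _ a) = false by rewrite /half_outside inl1.
have GE1 a b : GM_switch (adj A) X1 (lshift _ a) (lshift _ b) = adj B a b.
  by rewrite /GM_switch !hL !andbF /= AE1.
have GE2 a b : GM_switch (adj A) X1 (lshift _ a) (rshift _ b) = ~~ (N a b == 1).
  by rewrite /GM_switch inl1 hR /= AE2.
have GE3 a b : GM_switch (adj A) X1 (rshift _ a) (lshift _ b) = ~~ (N b a == 1).
  by rewrite /GM_switch (negbTE (inr1 a)) inl1 hR /= AE3.
have GE4 a b : GM_switch (adj A) X1 (rshift _ a) (rshift _ b) = adj B a b.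
  by rewrite /GM_switch !(negbTE (inr1 _)) /= AE4.
split.
  split; first exists k0.
    move=> x; rewrite -(splitK x); case: (split x) => a /=; first by rewrite nbL.
    by rewrite (negbTE (inr1 a)).
  move=> x; rewrite -(splitK x); case: (split x) => a /=; first by rewrite inl1.
  by move=> _; apply: Or32; rewrite nbR cX1 muln2.
split.
  pose f (x : 'I_(m * 2 + m * 2)) : 'I_(m * 2 + m * 2) :=
    match split x with inl a => rshift _ a | inr b => lshift _ (rho b) end.
  have finj : injective f.
    move=> x y; rewrite /f -(splitK x) -(splitK y) !unsplitK.
    case: (split x) => a; case: (split y) => b /= e.
    - by rewrite (rshift_inj e).
    - by move/eqP: e; rewrite eq_rlshift.
    - by move/eqP: e; rewrite eq_lrshift.
    - by rewrite (perm_inj (lshift_inj e)).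
  exists (perm finj) => x y; rewrite !permE /f -(splitK x) -(splitK y) !unsplitK.
  case: (split x) => a; case: (split y) => b /=.
  - by rewrite GE4 AE1.
  - rewrite GE3 AE2; apply: bool_aux; last exact: (N01 HT a b).
    exact: (keyN HT Hrho_mx a b).
  - rewrite GE2 AE3; apply: bool_aux; last exact: (N01 HT b a).
    exact: (keyN HT Hrho_mx b a).
  - by rewrite GE1 AE4 Hrho_aut.
move=> [s [Hiso Hs]].
have sL a : exists a', s (lshift _ a) = lshift (m * 2) a'.
  have : s (lshift _ a) \in X1 by rewrite -Hs; apply: imset_f; exact: inl1.
  by case/imsetP => a' _ ->; exists a'.
have sR b : exists b', s (rshift _ b) = rshift (m * 2) b'.
  have : s (rshift _ b) \notin X1 by rewrite -Hs (mem_imset _ _ (@perm_inj _ s)) inr1.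
  move: (s (rshift _ b)) => y; rewrite -(splitK y); case: (split y) => c /=.
    by rewrite inl1.
  by exists c.
have [s1 Hs1] := ex_restr (@lshift_inj (m * 2) (m * 2)) sL.
have [s2 Hs2] := ex_restr (@rshift_inj (m * 2) (m * 2)) sR.
have aut1 : graph_aut (adj B) s1.
  by move=> a b; have := Hiso (lshift _ a) (lshift _ b); rewrite !Hs1 GE1 AE1.
have aut2 : graph_aut (adj B) s2.
  by move=> a b; have := Hiso (rshift _ a) (rshift _ b); rewrite !Hs2 GE4 AE4.
have pS (s' : {perm 'I_(m * 2)}) : graph_aut (adj B) s' -> forall a, pr (s' a) = pr a.
  move=> h a; have [] := (proj1 (Horbits a (s' a))) (ex_intro _ s' (conj h erefl)) => ->//.
  by case: (rho_pq Hrho_mx a).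
pose i : 'I_m := Ordinal Hm0.
pose j : 'I_m := Ordinal Hm.
pose a := mxtens_index (i, (ord0 : 'I_2)).
pose b := mxtens_index (j, (ord0 : 'I_2)).
have pra : pr a = i by rewrite mxtens_indexK.
have prb : pr b = j by rewrite mxtens_indexK.
have e : N (s1 a) (s2 b) = N a b.
  rewrite /N !Nentry !pq_eq (pS _ aut1) (pS _ aut2) pra prb.
  by have -> : (i == j) = false by [].
have := Hiso (lshift _ a) (rshift _ b); rewrite Hs1 Hs2 GE2 AE2 e.
by case: (N a b == 1).
Qed.
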